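(* With $\overline{C}(\alpha)$ as defined in the context, $\overline{C}(1)=\dfrac{\pi^2}{3}$.
   Context: For a strictly increasing sequence $(\lambda_k)_{k=-\infty}^{\infty}$ of real numbers, put $\delta_k:=\min\{\lambda_k-\lambda_{k-1},\lambda_{k+1}-\lambda_k\}$. For $0\le\alpha\le2$, let $\overline{C}(\alpha)$ be the minimum of all constants $C(\alpha)$ such that $$\sum_{m=1}^N\sum_{\substack{n=1\\ n\ne m}}^N\frac{\delta_m^{2-\alpha}\delta_n^{\alpha}t_mt_n}{(\lambda_m-\lambda_n)^2}\le C(\alpha)\sum_{n=1}^N t_n^2$$ holds for every positive integer $N$, every strictly increasing real sequence $(\lambda_k)_{k\in\mathbb Z}$ and all nonnegative reals $t_1,\dots,t_N$; set $\overline{C}(\alpha)=\infty$ if no such real constant exists. *)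

(* Defs.v *)
From Stdlib Require Import Reals ZArith Lra Lia.
Open Scope R_scope.

Fixpoint sum1 (N : nat) (f : nat -> R) : R :=
  match N with
  | O => 0
  | S N' => sum1 N' f + f N
  end.

Definition strictly_increasing (lam : Z -> R) : Prop :=
  forall j k : Z, (j < k)%Z -> lam j < lam k.

Definition delta (lam : Z -> R) (k : Z) : R :=
  Rmin (lam k - lam (k - 1)%Z) (lam (k + 1)%Z - lam k).

Definition lhs (alpha : R) (N : nat) (lam : Z -> R) (t : nat -> R) : R :=
  sum1 N (fun m => sum1 N (fun n =>
    if Nat.eqb m n then 0
    else Rpower (delta lam (Z.of_nat m)) (2 - alpha)
         * Rpower (delta lam (Z.of_nat n)) alpha * t m * t n
         / (lam (Z.of_nat m) - lam (Z.of_nat n)) ^ 2)).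

Definition admissible (alpha C : R) : Prop :=
  forall (N : nat), (1 <= N)%nat ->
  forall lam : Z -> R, strictly_increasing lam ->
  forall t : nat -> R, (forall n, (1 <= n <= N)%nat -> 0 <= t n) ->
  lhs alpha N lam t <= C * sum1 N (fun n => t n ^ 2).

(* Main.v *)
Require Import Defs.
From Stdlib Require Import Reals ZArith Lra Lia.
From Coquelicot Require Import Coquelicot.
Open Scope R_scope.

Lemma sum1_S N f : sum1 (S N) f = sum1 N f + f (S N).
Proof. reflexivity. Qed.

Lemma sum1_ext N f g : (forall k, (1 <= k <= N)%nat -> f k = g k) -> sum1 N f = sum1 N g.
Proof.
  induction N; intros H; simpl; [reflexivity|].
  rewrite IHN by (intros; apply H; lia). rewrite H by lia. reflexivity.
Qed.

Lemma sum1_le N f g : (forall k, (1 <= k <= N)%nat -> f k <= g k) -> sum1 N f <= sum1 N g.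
Proof.
  induction N; intros H; simpl; [lra|].
  assert (sum1 N f <= sum1 N g) by (apply IHN; intros; apply H; lia).
  assert (f (S N) <= g (S N)) by (apply H; lia). lra.
Qed.

Lemma sum1_nonneg N f : (forall k, (1 <= k <= N)%nat -> 0 <= f k) -> 0 <= sum1 N f.
Proof.
  intros H. replace 0 with (sum1 N (fun _ => 0)).
  - apply sum1_le; auto.
  - induction N; simpl; [reflexivity| rewrite IHN; [lra| intros; apply H; lia]].
Qed.

Lemma sum1_plus N f g : sum1 N (fun k => f k + g k) = sum1 N f + sum1 N g.
Proof. induction N; simpl; [lra| rewrite IHN; lra]. Qed.

Lemma sum1_scal N c f : sum1 N (fun k => c * f k) = c * sum1 N f.
Proof. induction N; simpl; [lra| rewrite IHN; lra]. Qed.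

Lemma sum1_const N c : sum1 N (fun _ => c) = INR N * c.
Proof. induction N; simpl sum1; [simpl; lra| rewrite IHN, S_INR; lra]. Qed.

Lemma sum1_split a b f : sum1 (a + b) f = sum1 a f + sum1 b (fun k => f (a + k)%nat).
Proof.
  induction b; simpl.
  - rewrite Nat.add_0_r; lra.
  - rewrite Nat.add_succ_r. simpl. rewrite IHb. lra.
Qed.

Lemma sum1_S_l n g : sum1 (S n) g = g 1%nat + sum1 n (fun k => g (S k)).
Proof.
  induction n; simpl; [lra|]. simpl in IHn. rewrite IHn. lra.
Qed.

Lemma sum1_rev n f : sum1 n f = sum1 n (fun k => f (S n - k)%nat).
Proof.
  induction n; [reflexivity|].
  rewrite sum1_S, IHn, sum1_S_l.
  replace (S (S n) - 1)%nat with (S n) by lia.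
  rewrite (sum1_ext n (fun k => f (S (S n) - S k)%nat) (fun k => f (S n - k)%nat)).
  - lra.
  - intros k Hk. f_equal.
Qed.

Lemma sum1_swap N M (F : nat -> nat -> R) :
  sum1 N (fun m => sum1 M (fun n => F m n)) = sum1 M (fun n => sum1 N (fun m => F m n)).
Proof.
  induction N; simpl.
  - induction M; simpl; [reflexivity| rewrite <- IHM; lra].
  - rewrite IHN. rewrite <- sum1_plus. reflexivity.
Qed.

Lemma sum1_mono_n a b f : (a <= b)%nat -> (forall k, (1 <= k <= b)%nat -> 0 <= f k) ->
  sum1 a f <= sum1 b f.
Proof.
  intros Hab H. replace b with (a + (b - a))%nat by lia.
  rewrite sum1_split.
  assert (0 <= sum1 (b - a) (fun k => f (a + k)%nat)).
  { apply sum1_nonneg. intros; apply H; lia. }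
  lra.
Qed.

Lemma sum1_around N m f : (1 <= m <= N)%nat ->
  sum1 N f = sum1 (m - 1) (fun k => f (m - k)%nat) + f m + sum1 (N - m) (fun k => f (m + k)%nat).
Proof.
  intros H. replace N with (m + (N - m))%nat at 1 by lia.
  rewrite sum1_split.
  replace m with (S (m - 1)) at 1 by lia.
  rewrite sum1_S, sum1_rev.
  replace (S (m - 1)) with m by lia. reflexivity.
Qed.
Lemma sin_term_val y i : sin_term y i = (-1)^i * (y^(2*i+1) / IZR (Z.of_nat (fact (2*i+1)))).
Proof. unfold sin_term. rewrite INR_IZR_INZ. reflexivity. Qed.

Lemma sin_lb_poly y : 0 <= y -> y <= 2 -> y - y^3/6 <= sin y.
Proof.
  intros H0 H2.
  assert (PI/2 > 3/2) by exact PI2_3_2.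
  destruct (Rle_lt_dec y PI) as [Hp|Hp]; [|lra].
  destruct (SIN y H0 Hp) as [Hl _].
  unfold sin_lb, sin_approx in Hl. simpl sum_f_R0 in Hl.
  rewrite !sin_term_val in Hl. simpl in Hl.
  eapply Rle_trans; [|exact Hl].
  assert (0 <= y^5) by (apply pow_le; lra).
  assert (y^7 = y^5 * y^2) by ring.
  assert (y^2 <= 4) by nra.
  nra.
Qed.

Lemma inv_le a b : 0 < b -> b <= a -> 1 / a <= 1 / b.
Proof. intros. unfold Rdiv. rewrite !Rmult_1_l. apply Rinv_le_contravar; lra. Qed.

Lemma csc_lower y : 0 < y -> y <= 2 -> 1 / (sin y)^2 <= 1 / y^2 + 3.
Proof.
  intros H0 H2.
  pose proof (sin_lb_poly y (Rlt_le _ _ H0) H2) as Hs.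
  assert (Hq : 0 < y - y^3/6) by nra.
  assert (Hsp : 0 < sin y) by lra.
  assert (1 / (sin y)^2 <= 1 / (y - y^3/6)^2).
  { apply inv_le. apply pow_lt; lra. apply pow_incr. lra. }
  eapply Rle_trans; [exact H|].
  replace (y - y^3/6) with (y * (1 - y^2/6)) by field.
  set (u := y^2).
  assert (0 < u) by (unfold u; nra).
  assert (u <= 4) by (unfold u; nra).
  assert (0 < 1 - u/6) by lra.
  assert (Eu : (y * (1 - u/6))^2 = u * (1 - u/6)^2) by (unfold u; field).
  rewrite Eu.
  set (w := (1 - u/6)^2).
  assert (Hq2 : 0 < 8/3 - 35*u/36 + u^2/12).
  { assert (0 <= (4 - u) * (35/36 - (u+4)/12)) by (apply Rmult_le_pos; lra). nra. }
  assert (Hw : 1 <= w * (1 + 3*u)).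
  { assert (w * (1 + 3*u) - 1 = u * (8/3 - 35*u/36 + u^2/12)) by (unfold w; field).
    assert (0 <= u * (8/3 - 35*u/36 + u^2/12)) by (apply Rmult_le_pos; lra). lra. }
  assert (0 < w) by (unfold w; apply pow_lt; lra).
  assert (E : 1 / u + 3 - 1 / (u * w) = (w * (1 + 3*u) - 1) / (u * w)) by (field; lra).
  assert (0 <= (w * (1 + 3*u) - 1) / (u * w)).
  { apply Rmult_le_pos; [lra|]. left. apply Rinv_0_lt_compat. nra. }
  lra.
Qed.

Lemma trig_double y : 0 < y < PI/2 ->
  1 / (sin y)^2 + 1 / (sin (PI/2 - y))^2 = 4 / (sin (2*y))^2.
Proof.
  intros Hy. rewrite sin_shift, sin_2a.
  assert (0 < sin y) by (apply sin_gt_0; lra).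
  assert (0 < cos y) by (apply cos_gt_0; lra).
  pose proof (sin2_cos2 y) as E. unfold Rsqr in E.
  assert (E' : sin y ^2 + cos y^2 = 1) by (simpl; lra).
  transitivity ((sin y^2 + cos y^2) / (sin y^2 * cos y^2)).
  - field. lra.
  - rewrite E'. field. lra.
Qed.

Definition Hs (m : nat) : R := sum1 (m - 1) (fun k => 1 / (sin (INR k * PI / (2 * INR m)))^2).

Lemma sinPI4_sq : 1 / (sin (PI/4))^2 = 2.
Proof.
  rewrite sin_PI4.
  assert (sqrt 2 * sqrt 2 = 2) by (apply sqrt_sqrt; lra).
  assert (0 < sqrt 2) by (apply sqrt_lt_R0; lra).
  replace ((1 / sqrt 2)^2) with (1 / (sqrt 2 * sqrt 2)) by (field; lra).
  rewrite H. field.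
Qed.

Lemma Hs_double m : (1 <= m)%nat -> Hs (2 * m) = 4 * Hs m + 2.
Proof.
  intros Hm. unfold Hs.
  assert (Hmr : 1 <= INR m) by (apply (le_INR 1); lia).
  set (g := fun k => 1 / (sin (INR k * PI / (2 * INR (2 * m))))^2).
  set (h := fun k => 1 / (sin (INR k * PI / (2 * INR m)))^2).
  replace (2 * m - 1)%nat with (m + (m - 1))%nat by lia.
  rewrite sum1_split.
  assert (E1 : sum1 m g = sum1 (m - 1) g + g m).
  { destruct m; [lia|]. simpl. rewrite Nat.sub_0_r. reflexivity. }
  rewrite E1, (sum1_rev (m - 1) (fun k => g (m + k)%nat)).
  assert (Egm : g m = 2).
  { unfold g. rewrite mult_INR. replace (INR 2) with 2 by (simpl; lra).
    replace (INR m * PI / (2 * (2 * INR m))) with (PI / 4) by (field; lra).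
    apply sinPI4_sq. }
  rewrite Egm.
  assert (E2 : sum1 (m - 1) g + sum1 (m - 1) (fun k => g (m + (S (m - 1) - k))%nat)
             = 4 * sum1 (m - 1) h).
  { rewrite <- sum1_plus, <- sum1_scal. apply sum1_ext. intros k Hk.
    assert (Hk1 : 1 <= INR k) by (apply (le_INR 1); lia).
    assert (Hk2 : INR k + 1 <= INR m) by (rewrite <- S_INR; apply le_INR; lia).
    unfold g, h.
    replace (m + (S (m - 1) - k))%nat with (2 * m - k)%nat by lia.
    rewrite minus_INR by lia. rewrite mult_INR. replace (INR 2) with 2 by (simpl; lra).
    set (y := INR k * PI / (2 * (2 * INR m))).
    assert (PI > 0) by exact PI_RGT_0.
    assert (Hy0 : 0 < y).
    { unfold y. apply Rdiv_lt_0_compat; nra. }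
    assert (Hy1 : y < PI / 2).
    { unfold y. apply Rmult_lt_reg_r with (2 * (2 * INR m)); [lra|].
      field_simplify; try lra. nra. }
    replace ((2 * INR m - INR k) * PI / (2 * (2 * INR m))) with (PI / 2 - y) by (unfold y; field; lra).
    replace (INR k * PI / (2 * INR m)) with (2 * y) by (unfold y; field; lra).
    rewrite trig_double by lra. field. apply Rgt_not_eq, sin_gt_0; lra. }
  lra.
Qed.

Lemma Hs_pow N : Hs (2 ^ N) = 2 * ((2 ^ N)^2 - 1) / 3.
Proof.
  induction N.
  - unfold Hs. simpl. field.
  - rewrite Nat.pow_succ_r'. rewrite Hs_double.
    + rewrite IHN. simpl. field.
    + pose proof (Nat.pow_nonzero 2 N). lia.
Qed.

Definition Zs (n : nat) : R := sum1 n (fun k => 1 / (INR k)^2).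

Lemma Zs_nonneg_terms k : 0 <= 1 / (INR k)^2.
Proof. unfold Rdiv. rewrite Rmult_1_l. destruct (Req_dec (INR k) 0) as [E|E].
  - rewrite E. simpl. rewrite Rmult_0_l, Rinv_0. lra.
  - left. apply Rinv_0_lt_compat. apply pow_lt. pose proof (pos_INR k). lra.
Qed.

Lemma Hs_bounds m : (1 <= m)%nat ->
  (4 * INR m ^ 2 / PI ^ 2) * Zs (m - 1) <= Hs m /\
  Hs m <= (4 * INR m ^ 2 / PI ^ 2) * Zs (m - 1) + 3 * INR (m - 1).
Proof.
  intros Hm. assert (Hmr : 1 <= INR m) by (apply (le_INR 1); lia).
  assert (HP : PI > 0) by exact PI_RGT_0. pose proof PI_4.
  unfold Hs, Zs. rewrite <- sum1_scal.
  assert (Hk : forall k, (1 <= k <= m - 1)%nat ->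
     0 < INR k * PI / (2 * INR m) /\ INR k * PI / (2 * INR m) < PI / 2 /\
     4 * INR m ^ 2 / PI ^ 2 * (1 / INR k ^ 2) = 1 / (INR k * PI / (2 * INR m))^2).
  { intros k Hk. assert (Hk1 : 1 <= INR k) by (apply (le_INR 1); lia).
    assert (Hk2 : INR k + 1 <= INR m) by (rewrite <- S_INR; apply le_INR; lia).
    split; [apply Rdiv_lt_0_compat; nra|]. split.
    - apply Rmult_lt_reg_r with (2 * INR m); [lra|]. field_simplify; try lra. nra.
    - field. lra. }
  split.
  - apply sum1_le. intros k Hk'. destruct (Hk k Hk') as (H1 & H2 & H3). rewrite H3.
    set (y := INR k * PI / (2 * INR m)) in *.
    assert (0 < sin y) by (apply sin_gt_0; lra).
    pose proof (sin_lt_x y H1).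
    apply inv_le; [apply pow_lt; lra| apply pow_incr; lra].
  - replace (3 * INR (m - 1)) with (sum1 (m - 1) (fun _ => 3)) by (rewrite sum1_const; ring).
    rewrite <- sum1_plus.
    apply sum1_le. intros k Hk'. destruct (Hk k Hk') as (H1 & H2 & H3). rewrite H3.
    apply csc_lower; lra.
Qed.

Lemma pow2_gt n : (n < 2 ^ n)%nat.
Proof. induction n; simpl; lia. Qed.

Lemma Zs_mono a b : (a <= b)%nat -> Zs a <= Zs b.
Proof. intros. unfold Zs. apply sum1_mono_n; auto. intros; apply Zs_nonneg_terms. Qed.

Lemma zeta_ub n : Zs n <= PI ^ 2 / 6.
Proof.
  set (m := (2 ^ n)%nat).
  assert (Hm : (n < m)%nat) by apply pow2_gt.
  assert (Zs n <= Zs (m - 1)) by (apply Zs_mono; lia).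
  destruct (Hs_bounds m ltac:(lia)) as [H1 _].
  unfold m in H1. rewrite Hs_pow, pow_INR in H1. fold m in H1.
  replace (INR 2) with 2 in H1 by (simpl; lra).
  set (M := 2 ^ n) in *.
  assert (HM : 1 <= M) by (unfold M; clear; induction n; simpl; lra).
  assert (HP : PI > 0) by exact PI_RGT_0.
  assert (Zs (m - 1) <= PI ^ 2 * (M ^ 2 - 1) / (6 * M ^ 2)).
  { apply Rmult_le_reg_l with (4 * M ^ 2 / PI ^ 2).
    - apply Rdiv_lt_0_compat; [nra| apply pow_lt; lra].
    - eapply Rle_trans; [exact H1|]. right. field. split; lra. }
  assert (PI ^ 2 * (M ^ 2 - 1) / (6 * M ^ 2) <= PI ^ 2 / 6).
  { apply Rmult_le_reg_r with (6 * M ^ 2); [nra|]. field_simplify; try lra. nra. }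
  lra.
Qed.

Lemma zeta_lb N : PI ^ 2 / 6 - 15 / 2 ^ N <= Zs (2 ^ N - 1).
Proof.
  set (m := (2 ^ N)%nat).
  assert (Hm : (N < m)%nat) by apply pow2_gt.
  destruct (Hs_bounds m ltac:(lia)) as [_ H1].
  unfold m in H1. rewrite Hs_pow, pow_INR in H1. fold m in H1.
  rewrite minus_INR in H1 by lia. unfold m in H1. rewrite ?pow_INR in H1. fold m in H1.
  replace (INR 2) with 2 in H1 by (simpl; lra). simpl (INR 1) in H1.
  set (M := 2 ^ N) in *.
  assert (HM : 1 <= M) by (unfold M; clear; induction N; simpl; lra).
  assert (HP : PI > 0) by exact PI_RGT_0. pose proof PI_4.
  set (z := Zs (m - 1)) in *.
  assert (HA : 0 < 4 * M ^ 2 / PI ^ 2) by (apply Rdiv_lt_0_compat; [nra| apply pow_lt; lra]).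
  assert (PI ^ 2 / 6 - 15 / M <= (2 * (M ^ 2 - 1) / 3 - 3 * (M - 1)) / (4 * M ^ 2 / PI ^ 2)).
  { replace ((2 * (M ^ 2 - 1) / 3 - 3 * (M - 1)) / (4 * M ^ 2 / PI ^ 2))
      with (PI^2/6 - PI^2/(6 * M^2) - 3 * PI^2 * (M - 1) / (4 * M^2)) by (field; lra).
    assert (PI^2/(6 * M^2) <= 16 / (6 * M)).
    { apply Rmult_le_reg_r with (6 * M^2); [nra|]. field_simplify; try lra. nra. }
    assert (3 * PI^2 * (M - 1) / (4 * M^2) <= 12 / M).
    { apply Rmult_le_reg_r with (4 * M^2); [nra|]. field_simplify; try lra.
      assert (PI^2 <= 16) by nra. nra. }
    assert (16 / (6 * M) + 12 / M <= 15 / M).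
    { apply Rmult_le_reg_r with (6 * M); [nra|]. field_simplify; lra. }
    lra. }
  assert ((2 * (M ^ 2 - 1) / 3 - 3 * (M - 1)) / (4 * M ^ 2 / PI ^ 2) <= z).
  { apply Rmult_le_reg_r with (4 * M ^ 2 / PI ^ 2); [exact HA|].
    replace ((2 * (M ^ 2 - 1) / 3 - 3 * (M - 1)) / (4 * M ^ 2 / PI ^ 2) * (4 * M ^ 2 / PI ^ 2))
      with (2 * (M ^ 2 - 1) / 3 - 3 * (M - 1)) by (field; split; lra).
    lra. }
  lra.
Qed.

Lemma exp_convex l u : 0 <= l <= 1 -> exp (l * u) <= 1 - l + l * exp u.
Proof.
  intros Hl. set (c := l * u).
  pose proof (exp_ineq1_le (u - c)) as H1.
  pose proof (exp_ineq1_le (0 - c)) as H2.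
  assert (E1 : exp u = exp c * exp (u - c)) by (rewrite <- exp_plus; f_equal; ring).
  assert (E2 : 1 = exp c * exp (0 - c)) by (rewrite <- exp_plus, <- exp_0; f_equal; ring).
  assert (Hc : 0 < exp c) by apply exp_pos.
  assert (exp c * (l * (1 + (u - c)) + (1 - l) * (1 + (0 - c))) = exp c) by (unfold c; ring).
  assert (l * exp (u - c) + (1 - l) * exp (0 - c) >= l * (1 + (u - c)) + (1 - l) * (1 + (0 - c))) by nra.
  rewrite E1. rewrite E2 at 1. nra.
Qed.

Lemma expL2 a b : 0 < a -> a <= b -> b * (exp a - 1) <= a * (exp b - 1).
Proof.
  intros Ha Hab. pose proof (exp_convex (a / b) b) as H.
  replace (a / b * b) with a in H by (field; lra).
  assert (0 <= a / b <= 1).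
  { split. apply Rlt_le, Rdiv_lt_0_compat; lra.
    apply Rmult_le_reg_r with b; [lra|]. field_simplify; lra. }
  specialize (H H0).
  apply Rmult_le_compat_l with (r := b) in H; [|lra].
  replace (b * (1 - a / b + a / b * exp b)) with (b - a + a * exp b) in H by (field; lra).
  lra.
Qed.

Lemma expL1 a b : 0 < a -> a <= b -> a * (1 - exp (- b)) <= b * (1 - exp (- a)).
Proof.
  intros Ha Hab. pose proof (exp_convex (a / b) (- b)) as H.
  replace (a / b * - b) with (- a) in H by (field; lra).
  assert (0 <= a / b <= 1).
  { split. apply Rlt_le, Rdiv_lt_0_compat; lra.
    apply Rmult_le_reg_r with b; [lra|]. field_simplify; lra. }
  specialize (H H0).
  apply Rmult_le_compat_l with (r := b) in H; [|lra].
  replace (b * (1 - a / b + a / b * exp (- b))) with (b - a + a * exp (- b)) in H by (field; lra).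
  lra.
Qed.

Lemma exp_le x y : x <= y -> exp x <= exp y.
Proof. intros [H|H]. left; apply exp_increasing; auto. subst; lra. Qed.

Definition Qf (s x d : R) : R := d * exp (- (x * s)) / (exp (d * s) - 1).

Lemma exp_gt1 u : 0 < u -> 1 < exp u.
Proof. intros. pose proof (exp_ineq1_le u). lra. Qed.

Lemma Qf_nonneg s x d : 0 < s -> 0 < d -> 0 <= Qf s x d.
Proof.
  intros. unfold Qf. apply Rlt_le, Rdiv_lt_0_compat.
  - apply Rmult_lt_0_compat; [lra| apply exp_pos].
  - pose proof (exp_gt1 (d * s) ltac:(nra)). lra.
Qed.

Lemma bellman s x g d d' : 0 < s -> 0 < d -> 0 < d' -> d <= g -> d' <= g ->
  d' * exp (- ((x + g) * s)) + Qf s (x + g) d' <= Qf s x d.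
Proof.
  intros Hs Hd Hd' Hg Hg'. unfold Qf.
  set (e := exp (- (x * s))). set (E := exp (- (g * s))).
  set (P := exp (d' * s)). set (Pd := exp (d * s)).
  assert (Ee : exp (- ((x + g) * s)) = e * E) by (unfold e, E; rewrite <- exp_plus; f_equal; ring).
  rewrite Ee.
  assert (He : 0 < e) by apply exp_pos.
  assert (HE : 0 < E) by apply exp_pos.
  assert (HP : 1 < P) by (apply exp_gt1; nra).
  assert (HPd : 1 < Pd) by (apply exp_gt1; nra).
  assert (Key : d' * E * P * (Pd - 1) <= d * (P - 1)).
  { destruct (Rle_dec d' d) as [C|C].
    - assert (HE2 : E * Pd <= 1).
      { unfold E, Pd. rewrite <- exp_plus. rewrite <- exp_0. apply exp_le. nra. }
      pose proof (expL1 (d' * s) (d * s) ltac:(nra) ltac:(nra)) as L.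
      assert (EP : exp (- (d' * s)) * P = 1) by (unfold P; rewrite <- exp_plus, <- exp_0; f_equal; ring).
      assert (EPd : exp (- (d * s)) * Pd = 1) by (unfold Pd; rewrite <- exp_plus, <- exp_0; f_equal; ring).
      set (q := exp (- (d' * s))) in *. set (qd := exp (- (d * s))) in *.
      assert (L' : d' * (1 - qd) <= d * (1 - q)).
      { apply Rmult_le_reg_r with s; [lra|]. lra. }
      assert (d' * E * P * (Pd - 1) <= d' * P * (Pd - 1) / Pd).
      { apply Rmult_le_reg_r with Pd; [lra|].
        replace (d' * P * (Pd - 1) / Pd * Pd) with (d' * P * (Pd - 1)) by (field; lra).
        assert (0 <= d' * P * (Pd - 1)) by (apply Rmult_le_pos; [apply Rmult_le_pos|]; lra).
        nra. }
      assert (d' * P * (Pd - 1) / Pd = d' * P * (1 - qd)).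
      { assert (Eq : qd = 1 / Pd).
        { apply Rmult_eq_reg_r with Pd; [|lra]. rewrite EPd. field. lra. }
        rewrite Eq. field. lra. }
      assert (d' * P * (1 - qd) <= d * P * (1 - q)) by nra.
      assert (d * P * (1 - q) = d * (P - 1)) by nra.
      lra.
    - assert (HE2 : E * P <= 1).
      { unfold E, P. rewrite <- exp_plus. rewrite <- exp_0. apply exp_le. nra. }
      pose proof (expL2 (d * s) (d' * s) ltac:(nra) ltac:(nra)) as L.
      fold P Pd in L.
      assert (L' : d' * (Pd - 1) <= d * (P - 1)).
      { apply Rmult_le_reg_r with s; [lra|]. lra. }
      assert (0 <= d' * (Pd - 1)) by nra.
      nra. }
  assert (Ed : d * e / (Pd - 1) - (d' * (e * E) + d' * (e * E) / (P - 1))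
             = e * (d * (P - 1) - d' * E * P * (Pd - 1)) / ((P - 1) * (Pd - 1))) by (field; lra).
  assert (0 <= e * (d * (P - 1) - d' * E * P * (Pd - 1)) / ((P - 1) * (Pd - 1))).
  { apply Rmult_le_pos; [apply Rmult_le_pos; lra|]. left. apply Rinv_0_lt_compat. nra. }
  lra.
Qed.

Section Seq.
Variables (x d : nat -> R).
Hypothesis Hx0 : x 0%nat = 0.
Hypothesis Hd : forall k, 0 < d k.
Hypothesis Hg1 : forall k, d k <= x (S k) - x k.
Hypothesis Hg2 : forall k, d (S k) <= x (S k) - x k.

Lemma x_pos k : (1 <= k)%nat -> 0 < x k.
Proof.
  assert (forall k, 0 <= x k /\ 0 < x (S k)).
  { induction k0.
    - rewrite Hx0. pose proof (Hg1 0). pose proof (Hd 0). lra.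
    - pose proof (Hg1 (S k0)). pose proof (Hd (S k0)). lra. }
  intros Hk. destruct k; [lia|]. apply H.
Qed.

Lemma pointwise s n : 0 < s ->
  sum1 n (fun k => d k * exp (- (x k * s))) + Qf s (x n) (d n) <= Qf s 0 (d 0%nat).
Proof.
  intros Hs. induction n.
  - simpl. rewrite Hx0. lra.
  - rewrite sum1_S.
    pose proof (bellman s (x n) (x (S n) - x n) (d n) (d (S n)) Hs (Hd n) (Hd (S n)) (Hg1 n) (Hg2 n)) as B.
    replace (x n + (x (S n) - x n)) with (x (S n)) in B by ring.
    lra.
Qed.

Lemma geom u K : 0 < u ->
  1 / (exp u - 1) = sum1 K (fun j => exp (- (INR j * u))) + exp (- (INR K * u)) / (exp u - 1).
Proof.
  intros Hu. assert (1 < exp u) by (apply exp_gt1; lra).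
  induction K.
  - simpl. rewrite Rmult_0_l, Ropp_0, exp_0. lra.
  - rewrite IHK, sum1_S. rewrite S_INR.
    assert (E : exp (- (INR K * u)) = exp (- ((INR K + 1) * u)) * exp u)
      by (rewrite <- exp_plus; f_equal; ring).
    rewrite E. field. lra.
Qed.

Lemma combined s n K : 0 <= s ->
  s * sum1 n (fun k => d k * exp (- (x k * s))) <=
  d 0%nat * sum1 K (fun j => s * exp (- (INR j * d 0%nat * s))) + exp (- (INR K * d 0%nat * s)).
Proof.
  intros [Hs|Hs].
  2:{ subst. rewrite Rmult_0_l.
      assert (0 <= d 0%nat * sum1 K (fun j => 0 * exp (- (INR j * d 0%nat * 0)))).
      { rewrite sum1_scal. rewrite Rmult_0_l. right; ring. }
      pose proof (exp_pos (- (INR K * d 0%nat * 0))). lra. }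
  pose proof (Hd 0) as Hd0.
  pose proof (pointwise s n Hs) as P.
  pose proof (Qf_nonneg s (x n) (d n) Hs (Hd n)).
  assert (A1 : s * sum1 n (fun k => d k * exp (- (x k * s))) <= s * Qf s 0 (d 0%nat)).
  { apply Rmult_le_compat_l; lra. }
  set (u := d 0%nat * s).
  assert (Hu : 0 < u) by (unfold u; nra).
  assert (A2 : s * Qf s 0 (d 0%nat) = u * (1 / (exp u - 1))).
  { unfold Qf, u. rewrite Rmult_0_l, Ropp_0, exp_0. field.
    pose proof (exp_gt1 (d 0%nat * s) ltac:(nra)). lra. }
  rewrite (geom u K Hu) in A2.
  assert (A3 : u * (exp (- (INR K * u)) / (exp u - 1)) <= exp (- (INR K * u))).
  { pose proof (exp_ineq1_le u). pose proof (exp_pos (- (INR K * u))).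
    apply Rmult_le_reg_r with (exp u - 1); [lra|].
    field_simplify; try lra. nra. }
  assert (A4 : u * sum1 K (fun j => exp (- (INR j * u))) =
               d 0%nat * sum1 K (fun j => s * exp (- (INR j * d 0%nat * s)))).
  { unfold u. rewrite <- !sum1_scal. apply sum1_ext. intros j _.
    replace (INR j * d 0%nat * s) with (INR j * (d 0%nat * s)) by ring. ring. }
  replace (INR K * d 0%nat * s) with (INR K * u) by (unfold u; ring).
  lra.
Qed.

End Seq.

Definition Af (c s : R) := -(s / c + 1 / c ^ 2) * exp (-(c * s)).
Definition Bf (c s : R) := - exp (-(c * s)) / c.
Lemma Af_deriv c s : c <> 0 -> is_derive (Af c) s (s * exp (-(c * s))).
Proof. intros Hc. unfold Af. auto_derive. auto. field. auto. Qed.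
Lemma Bf_deriv c s : c <> 0 -> is_derive (Bf c) s (exp (-(c * s))).
Proof. intros Hc. unfold Bf. auto_derive. auto. field. auto. Qed.

Lemma is_derive_sum1 n (f : nat -> R -> R) (f' : nat -> R) s0 :
  (forall k, (1 <= k <= n)%nat -> is_derive (f k) s0 (f' k)) ->
  is_derive (fun s => sum1 n (fun k => f k s)) s0 (sum1 n f').
Proof.
  induction n; intros H; simpl.
  - apply (is_derive_const 0 s0).
  - apply (is_derive_plus (fun s => sum1 n (fun k => f k s)) (f (S n))).
    + apply IHn. intros; apply H; lia.
    + apply H; lia.
Qed.

Lemma sum1_opp n f : sum1 n (fun k => - f k) = - sum1 n f.
Proof. induction n; simpl; [lra| rewrite IHn; lra]. Qed.

Section Seq2.
Variables (x d : nat -> R).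
Hypothesis Hx0 : x 0%nat = 0.
Hypothesis Hd : forall k, 0 < d k.
Hypothesis Hg1 : forall k, d k <= x (S k) - x k.
Hypothesis Hg2 : forall k, d (S k) <= x (S k) - x k.

Lemma integrated S K n : 0 < S -> (1 <= K)%nat ->
  sum1 n (fun k => d k / (x k)^2) <=
  d 0%nat * sum1 K (fun j => 1 / (INR j * d 0%nat)^2) + 1 / (INR K * d 0%nat)
  + sum1 n (fun k => d k * ((S / x k + 1 / (x k)^2) * exp (-(x k * S)))).
Proof.
  intros HS HK.
  pose proof (Hd 0) as Hd0.
  set (d0 := d 0%nat) in *.
  set (F := fun s => sum1 n (fun k => d k * Af (x k) s) - d0 * sum1 K (fun j => Af (INR j * d0) s)
                     - Bf (INR K * d0) s).
  set (F' := fun s => sum1 n (fun k => d k * (s * exp (-(x k * s))))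
                      - d0 * sum1 K (fun j => s * exp (-(INR j * d0 * s)))
                      - exp (-(INR K * d0 * s))).
  assert (HD : forall s, is_derive F s (F' s)).
  { intros s. unfold F, F'.
    apply (is_derive_minus (fun s => sum1 n (fun k => d k * Af (x k) s) - d0 * sum1 K (fun j => Af (INR j * d0) s))
                           (fun s => Bf (INR K * d0) s)).
    - apply (is_derive_minus (fun s => sum1 n (fun k => d k * Af (x k) s))
                             (fun s => d0 * sum1 K (fun j => Af (INR j * d0) s))).
      + apply (is_derive_sum1 n (fun k s => d k * Af (x k) s)).
        intros k Hk. apply is_derive_scal. apply Af_deriv.
        pose proof (x_pos x d Hx0 Hd Hg1 k ltac:(lia)). lra.
      + apply is_derive_scal.
        apply (is_derive_sum1 K (fun j s => Af (INR j * d0) s) (fun j => s * exp (-(INR j * d0 * s)))).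
        intros j Hj. apply Af_deriv.
        assert (1 <= INR j) by (apply (le_INR 1); lia). nra.
    - apply Bf_deriv. assert (1 <= INR K) by (apply (le_INR 1); lia). nra. }
  assert (HF'neg : forall s, 0 <= s -> F' s <= 0).
  { intros s Hs. unfold F'.
    pose proof (combined x d Hx0 Hd Hg1 Hg2 s n K Hs) as C. fold d0 in C.
    rewrite <- sum1_scal in C.
    assert (sum1 n (fun k => d k * (s * exp (- (x k * s)))) =
            sum1 n (fun k => s * (d k * exp (- (x k * s))))) by (apply sum1_ext; intros; ring).
    lra. }
  destruct (MVT_cor3 F F' 0 S HS) as (c & Hc0 & HcS & Hc).
  { intros y _ _. apply is_derive_Reals. apply HD. }
  assert (F S <= F 0).
  { rewrite Hc. pose proof (HF'neg c Hc0). nra. }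
  assert (EF0 : F 0 = - sum1 n (fun k => d k / (x k)^2) + d0 * sum1 K (fun j => 1 / (INR j * d0)^2)
                      + 1 / (INR K * d0)).
  { unfold F, Af, Bf.
    assert (E1 : sum1 n (fun k => d k * (-(0 / x k + 1 / x k ^ 2) * exp (-(x k * 0))))
            = - sum1 n (fun k => d k / (x k)^2)).
    { rewrite <- sum1_opp. apply sum1_ext. intros k Hk. rewrite Rmult_0_r, Ropp_0, exp_0.
      pose proof (x_pos x d Hx0 Hd Hg1 k ltac:(lia)). field. lra. }
    assert (E2 : sum1 K (fun j => -(0 / (INR j * d0) + 1 / (INR j * d0) ^ 2) * exp (-(INR j * d0 * 0)))
            = - sum1 K (fun j => 1 / (INR j * d0)^2)).
    { rewrite <- sum1_opp. apply sum1_ext. intros j Hj. rewrite Rmult_0_r, Ropp_0, exp_0.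
      assert (1 <= INR j) by (apply (le_INR 1); lia). field. nra. }
    rewrite E1, E2, Rmult_0_r, Ropp_0, exp_0.
    assert (1 <= INR K) by (apply (le_INR 1); lia).
    assert (E3 : - (1) / (INR K * d0) = - (1 / (INR K * d0))) by (field; nra).
    rewrite E3. lra. }
  assert (EFS : sum1 n (fun k => d k * Af (x k) S) <= F S).
  { unfold F.
    assert (0 <= - (d0 * sum1 K (fun j => Af (INR j * d0) S))).
    { rewrite Ropp_mult_distr_r. apply Rmult_le_pos; [lra|].
      rewrite <- sum1_opp. apply sum1_nonneg. intros j Hj. unfold Af.
      assert (1 <= INR j) by (apply (le_INR 1); lia).
      assert (0 < INR j * d0) by nra.
      pose proof (exp_pos (- (INR j * d0 * S))).
      assert (0 <= S / (INR j * d0) + 1 / (INR j * d0) ^ 2).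
      { apply Rplus_le_le_0_compat; apply Rlt_le, Rdiv_lt_0_compat; try lra. apply pow_lt; lra. }
      nra. }
    assert (0 <= - Bf (INR K * d0) S).
    { unfold Bf. assert (1 <= INR K) by (apply (le_INR 1); lia).
      pose proof (exp_pos (- (INR K * d0 * S))).
      replace (- (- exp (- (INR K * d0 * S)) / (INR K * d0))) with (exp (- (INR K * d0 * S)) / (INR K * d0)) by (field; nra).
      apply Rlt_le, Rdiv_lt_0_compat; nra. }
    lra. }
  assert (EA : sum1 n (fun k => d k * Af (x k) S) =
               - sum1 n (fun k => d k * ((S / x k + 1 / (x k)^2) * exp (-(x k * S))))).
  { rewrite <- sum1_opp. apply sum1_ext. intros k _. unfold Af. ring. }
  lra.
Qed.

End Seq2.

Lemma inv_le' a b : 0 < b -> b <= a -> 1 / a <= 1 / b.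
Proof. intros. unfold Rdiv. rewrite !Rmult_1_l. apply Rinv_le_contravar; lra. Qed.

Lemma tail_bound c S : 0 < c -> 1 <= S ->
  (S / c + 1 / c^2) * exp (-(c * S)) <= (4 / c^3 + 4 / c^4) / S.
Proof.
  intros Hc HS.
  assert (Hy : 0 < c * S) by nra.
  assert (E : exp (c * S) = exp (c * S / 2) * exp (c * S / 2)) by (rewrite <- exp_plus; f_equal; field).
  pose proof (exp_ineq1_le (c * S / 2)).
  assert (Hb : (c * S)^2 / 4 <= exp (c * S)) by (rewrite E; nra).
  assert (Hinv : exp (-(c * S)) = 1 / exp (c * S)) by (rewrite exp_Ropp; field; apply Rgt_not_eq, exp_pos).
  rewrite Hinv.
  assert (1 / exp (c * S) <= 4 / (c * S)^2).
  { replace (4 / (c * S)^2) with (1 / ((c * S)^2 / 4)) by (field; lra).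
    apply inv_le'; [nra| lra]. }
  assert (0 <= S / c + 1 / c^2).
  { apply Rplus_le_le_0_compat; apply Rlt_le, Rdiv_lt_0_compat; try lra. apply pow_lt; lra. }
  apply Rle_trans with ((S / c + 1 / c^2) * (4 / (c * S)^2)).
  - apply Rmult_le_compat_l; lra.
  - replace ((S / c + 1 / c^2) * (4 / (c * S)^2)) with (4 / c^3 / S + 4 / c^4 / S / S) by (field; lra).
    replace ((4 / c^3 + 4 / c^4) / S) with (4 / c^3 / S + 4 / c^4 / S) by (field; lra).
    assert (0 < 4 / c^4 / S) by (apply Rdiv_lt_0_compat; [apply Rdiv_lt_0_compat; [lra| apply pow_lt; lra]| lra]).
    set (a := 4 / c^4 / S) in *.
    assert (a / S <= a).
    { apply Rmult_le_reg_r with S; [lra|]. replace (a / S * S) with a by (field; lra). nra. }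
    lra.
Qed.

Section Seq3.
Variables (x d : nat -> R).
Hypothesis Hx0 : x 0%nat = 0.
Hypothesis Hd : forall k, 0 < d k.
Hypothesis Hg1 : forall k, d k <= x (S k) - x k.
Hypothesis Hg2 : forall k, d (S k) <= x (S k) - x k.

Lemma one_sided n : d 0%nat * sum1 n (fun k => d k / (x k)^2) <= PI ^ 2 / 6.
Proof.
  pose proof (Hd 0) as Hd0. set (d0 := d 0%nat) in *.
  apply Rle_plus_epsilon. intros eps Heps.
  destruct (archimed_cor1 (eps / 2) ltac:(lra)) as (K & HK1 & HK2).
  set (C0 := sum1 n (fun k => d k * (4 / (x k)^3 + 4 / (x k)^4))).
  assert (HC0 : 0 <= C0).
  { apply sum1_nonneg. intros k Hk. pose proof (x_pos x d Hx0 Hd Hg1 k ltac:(lia)).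
    pose proof (Hd k). apply Rmult_le_pos; [lra|]. apply Rplus_le_le_0_compat; apply Rlt_le, Rdiv_lt_0_compat; try lra; apply pow_lt; lra. }
  set (S := 1 + 2 * d0 * C0 / eps).
  assert (HS : 1 <= S).
  { unfold S. assert (0 <= 2 * d0 * C0 / eps) by (apply Rmult_le_pos; [nra| left; apply Rinv_0_lt_compat; lra]). lra. }
  pose proof (integrated x d Hx0 Hd Hg1 Hg2 S K n ltac:(lra) ltac:(lia)) as I. fold d0 in I.
  assert (T : sum1 n (fun k => d k * ((S / x k + 1 / (x k)^2) * exp (-(x k * S)))) <= C0 / S).
  { replace (C0 / S) with (/ S * C0) by (field; lra). unfold C0. rewrite <- sum1_scal.
    apply sum1_le. intros k Hk. pose proof (x_pos x d Hx0 Hd Hg1 k ltac:(lia)).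
    pose proof (tail_bound (x k) S ltac:(lra) HS) as TB.
    replace (x k * S) with (x k * S) in TB by ring.
    replace (/ S * (d k * (4 / x k ^ 3 + 4 / x k ^ 4))) with (d k * ((4 / x k ^ 3 + 4 / x k ^ 4) / S)) by (field; lra).
    pose proof (Hd k). apply Rmult_le_compat_l; [lra|]. exact TB. }
  assert (Z : d0 * sum1 K (fun j => 1 / (INR j * d0)^2) = Zs K / d0).
  { replace (Zs K / d0) with (/ d0 * Zs K) by (field; lra). unfold Zs.
    rewrite <- sum1_scal, <- sum1_scal. apply sum1_ext.
    intros j Hj. assert (1 <= INR j) by (apply (le_INR 1); lia). field. split; lra. }
  rewrite Z in I.
  assert (HKr : 0 < INR K) by (apply lt_0_INR; lia).
  assert (E1 : d0 * (1 / (INR K * d0)) = / INR K) by (field; lra).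
  assert (E2 : d0 * (Zs K / d0) = Zs K) by (field; lra).
  assert (E3 : d0 * (C0 / S) <= eps / 2).
  { apply Rmult_le_reg_r with S; [lra|].
    replace (d0 * (C0 / S) * S) with (d0 * C0) by (field; lra).
    replace (eps / 2 * S) with (eps / 2 + d0 * C0) by (unfold S; field; lra).
    lra. }
  pose proof (zeta_ub K).
  apply Rmult_le_compat_l with (r := d0) in I; [|lra].
  rewrite !Rmult_plus_distr_l, E1, E2 in I.
  assert (d0 * sum1 n (fun k => d k * ((S / x k + 1 / x k ^ 2) * exp (- (x k * S)))) <= d0 * (C0 / S))
    by (apply Rmult_le_compat_l; lra).
  lra.
Qed.
End Seq3.

Lemma delta_pos lam k : strictly_increasing lam -> 0 < delta lam k.
Proof.
  intros H. unfold delta. apply Rmin_glb_lt.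
  - pose proof (H (k - 1)%Z k ltac:(lia)). lra.
  - pose proof (H k (k + 1)%Z ltac:(lia)). lra.
Qed.

Lemma OS_Z lam M n : strictly_increasing lam ->
  delta lam M * sum1 n (fun k => delta lam (M + Z.of_nat k)%Z / (lam (M + Z.of_nat k)%Z - lam M)^2)
  <= PI ^ 2 / 6.
Proof.
  intros H.
  set (x := fun k : nat => lam (M + Z.of_nat k)%Z - lam M).
  set (d := fun k : nat => delta lam (M + Z.of_nat k)%Z).
  assert (Hx0 : x 0%nat = 0) by (unfold x; simpl; rewrite Z.add_0_r; ring).
  assert (Hd : forall k, 0 < d k) by (intros; apply delta_pos; auto).
  assert (Hg1 : forall k, d k <= x (S k) - x k).
  { intros k. unfold d, x. unfold delta.
    replace (M + Z.of_nat (S k))%Z with (M + Z.of_nat k + 1)%Z by lia.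
    pose proof (Rmin_r (lam (M + Z.of_nat k)%Z - lam (M + Z.of_nat k - 1)%Z)
                       (lam (M + Z.of_nat k + 1)%Z - lam (M + Z.of_nat k)%Z)). lra. }
  assert (Hg2 : forall k, d (S k) <= x (S k) - x k).
  { intros k. unfold d, x. unfold delta.
    replace (M + Z.of_nat (S k) - 1)%Z with (M + Z.of_nat k)%Z by lia.
    pose proof (Rmin_l (lam (M + Z.of_nat (S k))%Z - lam (M + Z.of_nat k)%Z)
                       (lam (M + Z.of_nat (S k) + 1)%Z - lam (M + Z.of_nat (S k))%Z)). lra. }
  pose proof (one_sided x d Hx0 Hd Hg1 Hg2 n) as O.
  unfold d at 1 in O. simpl in O. rewrite Z.add_0_r in O. exact O.
Qed.

Lemma delta_refl lam j : delta (fun i => - lam (- i)%Z) j = delta lam (- j)%Z.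
Proof.
  unfold delta. rewrite Rmin_comm.
  replace (- (j - 1))%Z with (- j + 1)%Z by lia.
  replace (- (j + 1))%Z with (- j - 1)%Z by lia.
  f_equal; ring.
Qed.

Lemma OS_Z_left lam M n : strictly_increasing lam ->
  delta lam M * sum1 n (fun k => delta lam (M - Z.of_nat k)%Z / (lam M - lam (M - Z.of_nat k)%Z)^2)
  <= PI ^ 2 / 6.
Proof.
  intros H.
  set (lam' := fun i => - lam (- i)%Z).
  assert (H' : strictly_increasing lam').
  { intros j k Hjk. unfold lam'. pose proof (H (- k)%Z (- j)%Z ltac:(lia)). lra. }
  pose proof (OS_Z lam' (- M)%Z n H') as O.
  unfold lam' in O. rewrite !delta_refl in O.
  replace (- - M)%Z with M in O by lia.
  erewrite sum1_ext; [exact O|].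
  intros k Hk. simpl. rewrite delta_refl.
  replace (- (- M + Z.of_nat k))%Z with (M - Z.of_nat k)%Z by lia.
  replace (- - M)%Z with M by lia.
  f_equal; ring.
Qed.

Definition Kf (lam : Z -> R) (m n : nat) : R :=
  if Nat.eqb m n then 0
  else delta lam (Z.of_nat m) * delta lam (Z.of_nat n) / (lam (Z.of_nat m) - lam (Z.of_nat n)) ^ 2.

Lemma Kf_sym lam m n : Kf lam m n = Kf lam n m.
Proof.
  unfold Kf. rewrite Nat.eqb_sym. destruct (Nat.eqb n m); [reflexivity|].
  f_equal; ring.
Qed.

Lemma Kf_nonneg lam m n : strictly_increasing lam -> 0 <= Kf lam m n.
Proof.
  intros H. unfold Kf. destruct (Nat.eqb_spec m n); [lra|].
  pose proof (delta_pos lam (Z.of_nat m) H). pose proof (delta_pos lam (Z.of_nat n) H).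
  assert (0 < (lam (Z.of_nat m) - lam (Z.of_nat n)) ^ 2).
  { destruct (Nat.lt_gt_cases m n) as [[C|C] _]; [exact n0|..].
    - pose proof (H (Z.of_nat m) (Z.of_nat n) ltac:(lia)). simpl. nra.
    - pose proof (H (Z.of_nat n) (Z.of_nat m) ltac:(lia)). simpl. nra. }
  apply Rmult_le_pos; [nra|]. left. apply Rinv_0_lt_compat. lra.
Qed.

Lemma lhs_Kf N lam t : strictly_increasing lam ->
  lhs 1 N lam t = sum1 N (fun m => sum1 N (fun n => Kf lam m n * t m * t n)).
Proof.
  intros H. unfold lhs. apply sum1_ext. intros m _. apply sum1_ext. intros n _.
  unfold Kf. destruct (Nat.eqb m n); [ring|].
  replace (2 - 1) with 1 by ring.
  rewrite !Rpower_1 by (apply delta_pos; auto).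
  unfold Rdiv. ring.
Qed.

Lemma row_bound lam N m : strictly_increasing lam -> (1 <= m <= N)%nat ->
  sum1 N (fun n => Kf lam m n) <= PI ^ 2 / 3.
Proof.
  intros H Hm. rewrite (sum1_around N m) by lia.
  assert (E0 : Kf lam m m = 0) by (unfold Kf; rewrite Nat.eqb_refl; reflexivity).
  rewrite E0.
  set (M := Z.of_nat m).
  assert (ER : sum1 (N - m) (fun k => Kf lam m (m + k)) =
     delta lam M * sum1 (N - m) (fun k => delta lam (M + Z.of_nat k)%Z / (lam (M + Z.of_nat k)%Z - lam M)^2)).
  { rewrite <- sum1_scal. apply sum1_ext. intros k Hk. unfold Kf.
    destruct (Nat.eqb_spec m (m + k)); [lia|]. rewrite Nat2Z.inj_add. fold M.
    replace ((lam M - lam (M + Z.of_nat k)%Z)^2) with ((lam (M + Z.of_nat k)%Z - lam M)^2) by ring.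
    unfold Rdiv. ring. }
  assert (EL : sum1 (m - 1) (fun k => Kf lam m (m - k)) =
     delta lam M * sum1 (m - 1) (fun k => delta lam (M - Z.of_nat k)%Z / (lam M - lam (M - Z.of_nat k)%Z)^2)).
  { rewrite <- sum1_scal. apply sum1_ext. intros k Hk. unfold Kf.
    destruct (Nat.eqb_spec m (m - k)); [lia|]. rewrite Nat2Z.inj_sub by lia. fold M.
    unfold Rdiv. ring. }
  rewrite ER, EL.
  pose proof (OS_Z lam M (N - m) H). pose proof (OS_Z_left lam M (m - 1) H).
  lra.
Qed.

Lemma upper : admissible 1 (PI ^ 2 / 3).
Proof.
  intros N HN lam H t Ht.
  rewrite (lhs_Kf N lam t H).
  set (K := Kf lam).
  assert (A : sum1 N (fun m => sum1 N (fun n => K m n * t m * t n)) <=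
              sum1 N (fun m => sum1 N (fun n => K m n * t m ^ 2 / 2 + K m n * t n ^ 2 / 2))).
  { apply sum1_le. intros m _. apply sum1_le. intros n _.
    pose proof (Kf_nonneg lam m n H). fold K in H0.
    assert (0 <= K m n * (t m - t n)^2) by (apply Rmult_le_pos; [lra| apply pow2_ge_0]).
    nra. }
  assert (B : sum1 N (fun m => sum1 N (fun n => K m n * t m ^ 2 / 2 + K m n * t n ^ 2 / 2)) =
              sum1 N (fun m => sum1 N (fun n => K m n * t m ^ 2 / 2)) +
              sum1 N (fun m => sum1 N (fun n => K m n * t n ^ 2 / 2))).
  { rewrite <- sum1_plus. apply sum1_ext. intros m _. apply sum1_plus. }
  assert (C : sum1 N (fun m => sum1 N (fun n => K m n * t n ^ 2 / 2)) =
              sum1 N (fun m => sum1 N (fun n => K m n * t m ^ 2 / 2))).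
  { rewrite sum1_swap. apply sum1_ext. intros m _. apply sum1_ext. intros n _.
    unfold K. rewrite Kf_sym. reflexivity. }
  assert (D : sum1 N (fun m => sum1 N (fun n => K m n * t m ^ 2 / 2)) <=
              sum1 N (fun m => t m ^ 2 / 2 * (PI ^ 2 / 3))).
  { apply sum1_le. intros m Hm.
    assert (E : sum1 N (fun n => K m n * t m ^ 2 / 2) = t m ^ 2 / 2 * sum1 N (fun n => K m n)).
    { rewrite <- sum1_scal. apply sum1_ext. intros; unfold Rdiv; ring. }
    rewrite E. apply Rmult_le_compat_l.
    - assert (0 <= t m ^ 2) by apply pow2_ge_0. lra.
    - apply row_bound; auto. }
  assert (F : sum1 N (fun m => t m ^ 2 / 2 * (PI ^ 2 / 3)) = PI ^ 2 / 3 * sum1 N (fun n => t n ^ 2) / 2).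
  { transitivity (/ 2 * (PI ^ 2 / 3) * sum1 N (fun n => t n ^ 2)).
    - rewrite <- sum1_scal. apply sum1_ext. intros; unfold Rdiv; ring.
    - field. }
  lra.
Qed.

Lemma IZR_incr : strictly_increasing IZR.
Proof. intros j k H. apply IZR_lt. exact H. Qed.

Lemma delta_IZR z : delta IZR z = 1.
Proof.
  unfold delta. rewrite minus_IZR, plus_IZR.
  replace (IZR z - (IZR z - 1)) with 1 by ring.
  replace (IZR z + 1 - IZR z) with 1 by ring.
  apply Rmin_left. lra.
Qed.

Lemma Kf_IZR m k : (1 <= k)%nat ->
  Kf IZR m (m + k) = 1 / (INR k)^2 /\ ((k <= m)%nat -> Kf IZR m (m - k) = 1 / (INR k)^2).
Proof.
  intros Hk. split.
  - unfold Kf. destruct (Nat.eqb_spec m (m + k)); [lia|]. rewrite !delta_IZR.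
    rewrite <- !INR_IZR_INZ, plus_INR.
    replace ((INR m - (INR m + INR k))^2) with (INR k ^ 2) by ring. unfold Rdiv; ring.
  - intros Hkm. unfold Kf. destruct (Nat.eqb_spec m (m - k)); [lia|]. rewrite !delta_IZR.
    rewrite <- !INR_IZR_INZ, minus_INR by lia.
    replace ((INR m - (INR m - INR k))^2) with (INR k ^ 2) by ring. unfold Rdiv; ring.
Qed.

Lemma lhs_lattice N K : (2 * K <= N)%nat ->
  (INR N - 2 * INR K) * (2 * Zs K) <= lhs 1 N IZR (fun _ => 1).
Proof.
  intros HNK. rewrite (lhs_Kf N IZR _ IZR_incr).
  set (g := fun m => sum1 N (fun n => Kf IZR m n * 1 * 1)).
  assert (Hg0 : forall m, 0 <= g m).
  { intros m. apply sum1_nonneg. intros n _. pose proof (Kf_nonneg IZR m n IZR_incr). lra. }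
  assert (Hgm : forall m, (K + 1 <= m <= N - K)%nat -> 2 * Zs K <= g m).
  { intros m Hm. unfold g. rewrite (sum1_around N m) by lia.
    assert (E0 : Kf IZR m m = 0) by (unfold Kf; rewrite Nat.eqb_refl; reflexivity).
    rewrite E0.
    assert (L : Zs K <= sum1 (m - 1) (fun k => Kf IZR m (m - k) * 1 * 1)).
    { apply Rle_trans with (sum1 K (fun k => Kf IZR m (m - k) * 1 * 1)).
      - right. unfold Zs. apply sum1_ext. intros k Hk.
        destruct (Kf_IZR m k ltac:(lia)) as [_ E]. rewrite E by lia. ring.
      - apply sum1_mono_n; [lia|]. intros k _. pose proof (Kf_nonneg IZR m (m - k) IZR_incr). lra. }
    assert (R : Zs K <= sum1 (N - m) (fun k => Kf IZR m (m + k) * 1 * 1)).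
    { apply Rle_trans with (sum1 K (fun k => Kf IZR m (m + k) * 1 * 1)).
      - right. unfold Zs. apply sum1_ext. intros k Hk.
        destruct (Kf_IZR m k ltac:(lia)) as [E _]. rewrite E. ring.
      - apply sum1_mono_n; [lia|]. intros k _. pose proof (Kf_nonneg IZR m (m + k) IZR_incr). lra. }
    lra. }
  apply Rle_trans with (sum1 (K + (N - 2 * K)) g).
  - rewrite sum1_split.
    assert (0 <= sum1 K g) by (apply sum1_nonneg; auto).
    assert (sum1 (N - 2 * K) (fun _ => 2 * Zs K) <= sum1 (N - 2 * K) (fun k => g (K + k)%nat)).
    { apply sum1_le. intros k Hk. apply Hgm. lia. }
    rewrite sum1_const, minus_INR, mult_INR in H0 by lia. simpl (INR 2) in H0.
    replace (1 + 1) with 2 in H0 by ring.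
    lra.
  - apply sum1_mono_n; [lia| auto].
Qed.

Lemma lower C : admissible 1 C -> PI ^ 2 / 3 <= C.
Proof.
  intros HC. apply Rle_plus_epsilon. intros eps Heps.
  destruct (archimed_cor1 (eps / 60) ltac:(lra)) as (J & HJ1 & HJ2).
  set (K := (2 ^ J - 1)%nat).
  pose proof (pow2_gt J) as HJ.
  assert (HJr : INR J < 2 ^ J).
  { replace (2 ^ J) with (INR 2 ^ J) by (f_equal; simpl; lra). rewrite <- pow_INR. apply lt_INR. exact HJ. }
  assert (HJ0 : 0 < INR J) by (apply lt_0_INR; lia).
  assert (Z1 : PI ^ 2 / 6 - eps / 4 <= Zs K).
  { pose proof (zeta_lb J). fold K in H.
    assert (15 / 2 ^ J <= eps / 4).
    { assert (15 / 2 ^ J <= 15 / INR J).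
      { apply Rmult_le_compat_l; [lra|]. apply Rinv_le_contravar; lra. }
      assert (15 / INR J = 15 * / INR J) by reflexivity. lra. }
    lra. }
  pose proof (zeta_ub K) as Z2.
  assert (HP : PI ^ 2 / 6 <= 3) by (pose proof PI_4; pose proof PI_RGT_0; nra).
  destruct (archimed_cor1 (eps / (24 * (INR K + 1))) ltac:(apply Rdiv_lt_0_compat; [lra| pose proof (pos_INR K); lra])) as (N1 & HN1 & HN2).
  set (N := (N1 + 2 * K + 1)%nat).
  assert (HNr : INR N = INR N1 + 2 * INR K + 1) by (unfold N; rewrite !plus_INR, mult_INR; simpl; ring).
  pose proof (pos_INR K) as HK0.
  assert (HN1r : 0 < INR N1) by (apply lt_0_INR; lia).
  pose proof (lhs_lattice N K ltac:(unfold N; lia)) as L.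
  pose proof (HC N ltac:(unfold N; lia) IZR IZR_incr (fun _ => 1) ltac:(intros; lra)) as U.
  rewrite (sum1_ext N _ (fun _ => 1)) in U by (intros; ring).
  rewrite sum1_const in U.
  assert (HNpos : 0 < INR N) by lra.
  assert (Hc : (INR N - 2 * INR K) * (2 * Zs K) <= INR N * 1 * C) by lra.
  assert (2 * Zs K - 4 * INR K * Zs K / INR N <= C).
  { apply Rmult_le_reg_r with (INR N); [lra|].
    replace ((2 * Zs K - 4 * INR K * Zs K / INR N) * INR N) with ((INR N - 2 * INR K) * (2 * Zs K)) by (field; lra).
    lra. }
  assert (4 * INR K * Zs K / INR N <= eps / 2).
  { assert (0 <= Zs K) by (unfold Zs; apply sum1_nonneg; intros; apply Zs_nonneg_terms).
    assert (4 * INR K * Zs K / INR N <= 12 * INR K / INR N1).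
    { apply Rmult_le_reg_r with (INR N * INR N1); [nra|].
      replace (4 * INR K * Zs K / INR N * (INR N * INR N1)) with (4 * INR K * Zs K * INR N1) by (field; lra).
      replace (12 * INR K / INR N1 * (INR N * INR N1)) with (12 * INR K * INR N) by (field; lra).
      assert (Zs K <= 3) by lra.
      assert (4 * INR K * Zs K <= 12 * INR K) by nra.
      assert (0 <= 4 * INR K * Zs K) by nra.
      assert (4 * INR K * Zs K * INR N1 <= 12 * INR K * INR N1) by nra.
      assert (12 * INR K * INR N1 <= 12 * INR K * INR N) by nra.
      lra. }
    assert (12 * INR K / INR N1 <= eps / 2).
    { assert (12 * INR K / INR N1 = 12 * INR K * / INR N1) by reflexivity.
      assert (12 * INR K * / INR N1 <= 12 * (INR K + 1) * (eps / (24 * (INR K + 1)))).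
      { apply Rmult_le_compat; try lra. left; apply Rinv_0_lt_compat; lra. }
      replace (12 * (INR K + 1) * (eps / (24 * (INR K + 1)))) with (eps / 2) in H3 by (field; lra).
      lra. }
    lra. }
  lra.
Qed.

Theorem theorem4 :
  admissible 1 (PI ^ 2 / 3) /\ (forall C : R, admissible 1 C -> PI ^ 2 / 3 <= C).
Proof. split; [exact upper| exact lower]. Qed.
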